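(* Let $n\ge1$, $\mathbf{x},\mathbf{x}'\in\mathbb{R}^n$, let $P$ be the cyclic shift matrix ($P\mathbf{v}=[v_n,v_1,\ldots,v_{n-1}]^T$), let $h:\mathbb{R}\to\mathbb{R}$, and let $\kappa$ be the radial basis function kernel $\kappa(\mathbf{u},\mathbf{v})=h(\|\mathbf{u}-\mathbf{v}\|^2)$. Define $\mathbf{k}^{\mathbf{xx}'}\in\mathbb{R}^n$ by $k^{\mathbf{xx}'}_i=\kappa(\mathbf{x}',P^{i-1}\mathbf{x})$. Then $$\mathbf{k}^{\mathbf{xx}'}=h\!\left(\|\mathbf{x}\|^2+\|\mathbf{x}'\|^2-2\,\mathcal{F}^{-1}\left(\hat{\mathbf{x}}^{*}\odot\hat{\mathbf{x}}'\right)\right),$$ with $h$ applied element-wise and the scalars added to every entry. In particular, for the Gaussian kernel $\kappa(\mathbf{u},\mathbf{v})=\exp\left(-\frac{1}{\sigma^2}\|\mathbf{u}-\mathbf{v}\|^2\right)$ ($\sigma>0$), $\mathbf{k}^{\mathbf{xx}'}=\exp\left(-\frac{1}{\sigma^2}\left(\|\mathbf{x}\|^2+\|\mathbf{x}'\|^2-2\mathcal{F}^{-1}(\hat{\mathbf{x}}^{*}\odot\hat{\mathbf{x}}')\right)\right)$.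
   Context: For $\mathbf{v}\in\mathbb{C}^n$, $\hat{\mathbf{v}}=\mathcal{F}(\mathbf{v})$ is the discrete Fourier transform, $\hat{v}_k=\sum_{j=1}^n v_j e^{-2\pi \mathrm{i}(j-1)(k-1)/n}$, and $\mathcal{F}^{-1}$ is its inverse. $^{*}$ denotes element-wise complex conjugation and $\odot$ element-wise product; $\|\cdot\|$ is the Euclidean norm. *)

(* Defs.v *)
From HB Require Import structures.
From mathcomp Require Import all_boot all_order all_algebra.
From mathcomp Require Import all_classical all_reals all_analysis.
From mathcomp Require Import complex.
Set Implicit Arguments. Unset Strict Implicit. Unset Printing Implicit Defensive.
Import Order.TTheory GRing.Theory Num.Theory.
Local Open Scope ring_scope.
Local Open Scope complex_scope.

Section Defs.
Variable R : realType.
Variable n : nat.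

Definition sqnorm (v : 'cV[R]_n) : R := \sum_(i < n) v i 0 ^+ 2.

(* cyclic shift P v = [v_n, v_1, ..., v_{n-1}]^T (0-based: (P v)_i = v_{i-1 mod n}) *)
Definition cshift (v : 'cV[R]_n) : 'cV[R]_n := \col_i v (ord_pred i) 0.

Definition rbf_kernel (h : R -> R) (u v : 'cV[R]_n) : R := h (sqnorm (u - v)).

(* k^{xx'}_i = kappa(x', P^{i-1} x), 1-based i; here i : 'I_n is 0-based,
   so entry i is kappa(x', P^i x) *)
Definition kvec (h : R -> R) (x x' : 'cV[R]_n) : 'cV[R]_n :=
  \col_(i < n) rbf_kernel h x' (iter i cshift x).

Definition expi (t : R) : R[i] := (cos t +i* sin t)%C.

Definition dft (v : 'cV[R[i]]_n) : 'cV[R[i]]_n :=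
  \col_(k < n) \sum_(j < n) v j 0 * expi (- (2 * pi * (j%:R * k%:R) / n%:R)).

Definition idft (w : 'cV[R[i]]_n) : 'cV[R[i]]_n :=
  \col_(j < n) (n%:R^-1 * \sum_(k < n) w k 0 * expi (2 * pi * (j%:R * k%:R) / n%:R)).

Definition cvec (v : 'cV[R]_n) : 'cV[R[i]]_n := \col_i ((v i 0)%:C)%C.

Definition cconj (v : 'cV[R[i]]_n) : 'cV[R[i]]_n := \col_i (v i 0)^*.
Definition hadamard (v w : 'cV[R[i]]_n) : 'cV[R[i]]_n := \col_i (v i 0 * w i 0).

End Defs.

(* Main.v *)
Require Import Defs.
From HB Require Import structures.
From mathcomp Require Import all_boot all_order all_algebra.
From mathcomp Require Import all_classical all_reals all_analysis.
From mathcomp Require Import complex.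
From mathcomp Require Import ring lra zify.
Import Order.TTheory GRing.Theory Num.Theory.
Local Open Scope ring_scope.
Local Open Scope complex_scope.

Section S.
Variable R : realType.

Lemma expiD (a b : R) : expi (a + b) = expi a * expi b.
Proof. rewrite /expi cosD sinD; simpc. congr Complex; ring. Qed.

Lemma expi0 : expi (0:R) = 1.
Proof. by rewrite /expi cos0 sin0. Qed.

Lemma expiMn (m : nat) (t : R) : expi (m%:R * t) = expi t ^+ m.
Proof.
elim: m => [|m IH]; first by rewrite mul0r expi0 expr0.
by rewrite -addn1 natrD mulrDl mul1r expiD IH exprD expr1.
Qed.

Lemma conj_expi (t : R) : (expi t)^* = expi (- t).
Proof. by rewrite /expi cosN sinN. Qed.

Lemma expi2pi : expi (pi *+ 2 : R) = 1.
Proof. by rewrite /expi cos2pi sin2pi. Qed.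

Lemma expi_neq1 (t : R) : 0 < t < pi *+ 2 -> expi t != 1.
Proof.
move=> /andP[t0 t2]; apply/negP => /eqP [c1 _].
have pi0 := @pi_gt0 R.
have H0 : (0:R) \in `[0, pi] by rewrite in_itv /= lexx ltW.
case: (leP t pi) => tp.
  have Ht : t \in `[0, pi] by rewrite in_itv /= ltW.
  have := cos_inj Ht H0; rewrite c1 cos0 => /(_ erefl) t00.
  by move: t0; rewrite t00 ltxx.
have Ht : pi *+ 2 - t \in `[0, pi].
  by rewrite in_itv /= subr_ge0 ltW //= lerBlDr mulr2n lerD2l ltW.
have := cos_inj Ht H0; rewrite cos0 cosB cos2pi sin2pi c1 mul0r mulr1 addr0.
move=> /(_ erefl) /eqP; rewrite subr_eq0 => /eqP e.
by move: t2; rewrite e ltxx.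
Qed.

Definition rot (n : nat) (hn : (0 < n)%N) (i k : 'I_n) : 'I_n :=
  Ordinal (ltn_pmod (k + i) hn).

Arguments rot {n}.

Lemma rot_inj n hn i : injective (@rot n hn i).
Proof.
move=> a b /(congr1 val) /= /eqP; rewrite eqn_modDr !modn_small // => /eqP.
exact: val_inj.
Qed.

Lemma pred_mod n a : (0 < n)%N -> (((a.+1 %% n) + n).-1 %% n = a %% n)%N.
Proof.
case: n => // n' _.
by rewrite addnS /= modnDml addSnnS modnDr.
Qed.

Lemma iter_cshift n (hn : (0 < n)%N) m (x : 'cV[R]_n) (k j : 'I_n) :
  ((k + m) %% n)%N = j -> iter m (@cshift R n) x j 0 = x k 0.
Proof.
elim: m j => [|m IH] j /=.
  by rewrite addn0 modn_small // => e; congr (x _ 0); apply: val_inj.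
move=> e; rewrite /cshift mxE; apply: IH => /=.
by rewrite -e addnS pred_mod.
Qed.

Lemma modP_key n (hn : (0 < n)%N) (i j l : 'I_n) :
  (((j + i + n.-1 * l) %% n == 0) = (l == rot hn i j))%N.
Proof.
have e : (j + i + n.-1 * l + l = j + i + l * n)%N.
  by case: n hn i j l => // n' _ i j l /=; rewrite -addnA -mulSnr mulnC.
have := eqn_modDr l (j + i + n.-1 * l) 0; rewrite e add0n => /(_ n).
rewrite [(j + i + l * n)%N]addnC modnMDl mod0n => <-.
by rewrite -(inj_eq val_inj) /= (modn_small (ltn_ord l)) eq_sym.
Qed.

Lemma expi_pos n (j k : nat) :
  expi (2 * pi * (j%:R * k%:R) / n%:R) = expi (2 * pi / n%:R : R) ^+ (j * k).
Proof. by rewrite -expiMn natrM; congr expi; ring. Qed.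

Lemma expi_neg n (j k : nat) :
  expi (- (2 * pi * (j%:R * k%:R) / n%:R)) = expi (- (2 * pi / n%:R) : R) ^+ (j * k).
Proof. by rewrite -expiMn natrM; congr expi; ring. Qed.

Lemma w_n n : (0 < n)%N -> expi (2 * pi / n%:R : R) ^+ n = 1.
Proof.
move=> hn; rewrite -expiMn -expi2pi; congr expi.
have nz : (n%:R : R) != 0 by rewrite pnatr_eq0 -lt0n.
by rewrite mulr2n; field.
Qed.

Lemma v_w n : (0 < n)%N ->
  expi (- (2 * pi / n%:R) : R) = expi (2 * pi / n%:R) ^+ n.-1.
Proof.
move=> hn; set w := expi (2 * pi / n%:R : R).
have vw : expi (- (2 * pi / n%:R) : R) * w = 1.
  by rewrite /w -expiD addNr expi0.
have wn : w ^+ n.-1.+1 = 1 by rewrite prednK // w_n.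
by rewrite -[LHS]mulr1 -wn exprS mulrA vw mul1r.
Qed.

Lemma w_mod n m : (0 < n)%N ->
  expi (2 * pi / n%:R : R) ^+ m = expi (2 * pi / n%:R : R) ^+ (m %% n).
Proof.
move=> hn; rewrite {1}(divn_eq m n) exprD mulnC exprM w_n // expr1n mul1r.
by [].
Qed.

Lemma w_neq1 n r : (0 < r < n)%N -> expi (2 * pi / n%:R : R) ^+ r != 1.
Proof.
move=> /andP[r0 rn]; rewrite -expiMn; apply: expi_neq1.
have n0 : (0 : R) < n%:R by rewrite ltr0n (ltn_trans r0).
have pi0 := @pi_gt0 R.
apply/andP; split.
  by rewrite mulr_gt0 ?ltr0n // divr_gt0 // mulr_gt0.
have nz : (n%:R : R) != 0 by rewrite gt_eqF.
have -> : r%:R * (2 * pi / n%:R) = (pi *+ 2 : R) * (r%:R / n%:R) by rewrite mulr2n; field.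
have p2 : 0 < (pi *+ 2 : R) by rewrite mulr2n addr_gt0.
by rewrite gtr_pMr // ltr_pdivrMr // mul1r ltr_nat.
Qed.

Lemma sum_w n m : (0 < n)%N ->
  \sum_(k < n) expi (2 * pi / n%:R : R) ^+ (k * m) =
  if (m %% n == 0)%N then n%:R else 0.
Proof.
move=> hn; set w := expi _.
under eq_bigr => k _ do rewrite mulnC exprM.
case: ifP => hm.
  rewrite w_mod // (eqP hm) expr0.
  under eq_bigr => k _ do rewrite expr1n.
  by rewrite sumr_const card_ord.
have z1 : w ^+ m != 1.
  by rewrite w_mod // w_neq1 // lt0n hm ltn_pmod.
have := subrX1 (w ^+ m) n.
rewrite -exprM mulnC exprM w_n // expr1n subrr => /esym /eqP.
by rewrite mulf_eq0 subr_eq0 (negbTE z1) => /eqP.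
Qed.

Lemma dft_cvec n (hn : (0 < n)%N) (x : 'cV[R]_n) (k : 'I_n) :
  dft (cvec x) k 0 =
  \sum_(j < n) (x j 0)%:C * expi (2 * pi / n%:R : R) ^+ (n.-1 * (j * k)).
Proof.
rewrite mxE; apply: eq_bigr => j _.
by rewrite mxE expi_neg v_w // -exprM.
Qed.

Lemma conj_realM (a : R) (z : R[i]) : (a%:C * z)^* = a%:C * z^*.
Proof. by case: z => b c; simpc. Qed.

Lemma conjcD (a b : R[i]) : (a + b)^* = a^* + b^*.
Proof. by case: a => ? ?; case: b => ? ?; simpc. Qed.

Lemma conjc0' : (0 : R[i])^* = 0.
Proof. by apply/eqP; rewrite eq_complex /= oppr0 eqxx. Qed.

Lemma conj_dft n (hn : (0 < n)%N) (x : 'cV[R]_n) (k : 'I_n) :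
  (dft (cvec x) k 0)^* =
  \sum_(j < n) (x j 0)%:C * expi (2 * pi / n%:R : R) ^+ (j * k).
Proof.
rewrite mxE (big_morph conjc conjcD conjc0'); apply: eq_bigr => j _.
rewrite mxE conj_realM; congr (_ * _).
rewrite -expi_pos /expi /= cosN sinN.
by apply/eqP; rewrite eq_complex /= opprK !eqxx.
Qed.

Lemma sum_wl n (hn : (0 < n)%N) (i j l : 'I_n) :
  \sum_(k < n) expi (2 * pi / n%:R : R) ^+ (k * (j + i + n.-1 * l)) =
  if l == rot hn i j then n%:R else 0.
Proof. by rewrite sum_w // modP_key. Qed.

Lemma hadE n (v w : 'cV[R[i]]_n) k : hadamard v w k 0 = v k 0 * w k 0.
Proof. by rewrite mxE. Qed.

Lemma cconjE n (v : 'cV[R[i]]_n) k : cconj v k 0 = (v k 0)^*.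
Proof. by rewrite mxE. Qed.

Lemma c_val n (hn : (0 < n)%N) (x x' : 'cV[R]_n) (i : 'I_n) :
  idft (hadamard (cconj (dft (cvec x))) (dft (cvec x'))) i 0 =
  (\sum_(j < n) x j 0 * x' (rot hn i j) 0)%:C.
Proof.
rewrite mxE.
under eq_bigr => k _ do rewrite hadE cconjE conj_dft // dft_cvec // expi_pos.
set w := expi _.
have step : forall k : 'I_n,
  (\sum_(j < n) (x j 0)%:C * w ^+ (j * k)) *
  (\sum_(l < n) (x' l 0)%:C * w ^+ (n.-1 * (l * k))) * w ^+ (i * k) =
  \sum_(j < n) \sum_(l < n) ((x j 0)%:C * (x' l 0)%:C) * w ^+ (k * (j + i + n.-1 * l)).
  move=> k; rewrite big_distrl /= big_distrl /=; apply: eq_bigr => j _.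
  rewrite big_distrr /= big_distrl /=; apply: eq_bigr => l _.
  rewrite !mulrA -!mulrA; congr (_ * _).
  rewrite mulrCA; congr (_ * _); rewrite -!exprD; congr (_ ^+ _).
  nia.
under eq_bigr => k _ do rewrite step.
rewrite exchange_big /=.
under eq_bigr => j _ do rewrite exchange_big /=.
have step2 : forall j : 'I_n,
  \sum_(l < n) \sum_(k < n) ((x j 0)%:C * (x' l 0)%:C) * w ^+ (k * (j + i + n.-1 * l))
  = (x j 0)%:C * (x' (rot hn i j) 0)%:C * n%:R.
  move=> j; under eq_bigr => l _ do rewrite -big_distrr sum_wl.
  rewrite (bigD1 (rot hn i j)) //= eqxx [X in _ + X]big1 ?addr0 //.
  by move=> l /negbTE ->; rewrite mulr0.
under eq_bigr => j _ do rewrite step2.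
have nz : (n%:R : R[i]) != 0 by rewrite pnatr_eq0 -lt0n.
rewrite -big_distrl /= mulrC -mulrA mulfV // mulr1.
rewrite rmorph_sum; apply: eq_bigr => j _.
by rewrite rmorphM.
Qed.

Lemma sq_key n (hn : (0 < n)%N) (x x' : 'cV[R]_n) (i : 'I_n) :
  sqnorm (x' - iter i (@cshift R n) x) =
  sqnorm x + sqnorm x' - 2 * \sum_(j < n) x j 0 * x' (rot hn i j) 0.
Proof.
rewrite /sqnorm (reindex_inj (@rot_inj n hn i)) /=.
rewrite [in X in _ = _ + X - _](reindex_inj (@rot_inj n hn i)) /=.
under eq_bigr => k _ do rewrite !mxE (@iter_cshift n hn _ _ k) //.
rewrite mulr_sumr -big_split -sumrB /=; apply: eq_bigr => k _.
ring.
Qed.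
End S.

Local Open Scope ring_scope.

Theorem mainTheorem4 (R : realType) (n : nat) (hn : (0 < n)%N) (x x' : 'cV[R]_n) :
  let c := idft (hadamard (cconj (dft (cvec x))) (dft (cvec x'))) in
  (forall (h : R -> R) (i : 'I_n),
     exists r : R, c i 0 = (r%:C)%C /\
       kvec h x x' i 0 = h (sqnorm x + sqnorm x' - 2 * r)) /\
  (forall (sigma : R), 0 < sigma -> forall i : 'I_n,
     exists r : R, c i 0 = (r%:C)%C /\
       kvec (fun t => expR (- (sigma ^+ 2)^-1 * t)) x x' i 0 =
         expR (- (sigma ^+ 2)^-1 * (sqnorm x + sqnorm x' - 2 * r))).
Proof.
move=> c; split.
  move=> h i; exists (\sum_(j < n) x j 0 * x' (@rot n hn i j) 0); split.
    exact: c_val.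
  by rewrite /kvec mxE /rbf_kernel sq_key.
move=> sigma _ i; exists (\sum_(j < n) x j 0 * x' (@rot n hn i j) 0); split.
  exact: c_val.
by rewrite /kvec mxE /rbf_kernel sq_key.
Qed.
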